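(* Under the standing assumptions of the context, with $C$ defined from $E$ and $\le$ as in the context, the order $\le$ is compatible with $C$, i.e. $x<y<z$ implies $C(x;y,z)\vee C(z;x,y)$; and $C$ satisfies (C8): whenever $C(x;y,z)$ holds there exist $w_1,w_2\in N$ with $C(w_1;y,z)\wedge C(x;y,w_1)\wedge w_1<\min\{y,z\}$ and $C(w_2;y,z)\wedge C(x;y,w_2)\wedge\max\{y,z\}<w_2$.
   Context: Standing assumptions: $(N,E)$ is a countably infinite 3-hypergraph (a set $N$ with a set $E$ of 3-element subsets, the edges) which is ${\le}4$-set-homogeneous (for $s\le4$, whenever $U,V\subseteq N$ of size $s$ carry isomorphic induced subhypergraphs there is $g\in \mathrm{Aut}(N,E)$ with $U^g=V$), and $\le$ is a total order on $N$ preserved by $\mathrm{Aut}(N,E)$. Moreover, for each $i\in\{1,2,3\}$ there is a 4-subset of $N$ containing exactly $i$ edges, and for all $u_1<u_2<u_3<u_4$ in $N$: if $\{u_1,\dots,u_4\}$ contains exactly one edge, it is $\{u_1,u_2,u_3\}$; if it contains exactly two edges, they are $\{u_1,u_3,u_4\}$ and $\{u_2,u_3,u_4\}$; if it contains exactly three edges, they are the three 3-subsets containing $u_1$. The relation $C$ on $N$ is: $C(x;y,z)$ iff either $y=z\ne x$; or $x,y,z$ distinct, $x<\min\{y,z\}$ and $\{x,y,z\}\in E$; or $x,y,z$ distinct, $\max\{y,z\}<x$ and $\{x,y,z\}\notin E$. *)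

(* Defs.v *)
From Stdlib Require Import List Arith.
Import ListNotations.

Section Defs.
Context {N : Type}.

Definition is_3hypergraph (E : N -> N -> N -> bool) : Prop :=
  (forall x y z, E x y z = E y x z) /\
  (forall x y z, E x y z = E x z y) /\
  (forall x y z, E x y z = true -> x <> y /\ y <> z /\ x <> z).

Definition countably_infinite : Prop :=
  exists e : nat -> N,
    (forall m n, e m = e n -> m = n) /\ (forall x, exists n, e n = x).

Definition is_total_order (le : N -> N -> Prop) : Prop :=
  (forall x, le x x) /\
  (forall x y, le x y -> le y x -> x = y) /\
  (forall x y z, le x y -> le y z -> le x z) /\
  (forall x y, le x y \/ le y x).

Definition lt_of (le : N -> N -> Prop) (x y : N) : Prop := le x y /\ x <> y.

Definition is_aut (E : N -> N -> N -> bool) (g : N -> N) : Prop :=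
  (exists h : N -> N, (forall x, h (g x) = x) /\ (forall y, g (h y) = y)) /\
  (forall x y z, E (g x) (g y) (g z) = E x y z).

(* <=4-set-homogeneity: finite subsets U, V are given as duplicate-free lists;
   an isomorphism of induced subhypergraphs is a map f injective on U,
   mapping U into V (hence onto V, as |U| = |V|) and preserving E on U. *)
Definition set_homogeneous_le4 (E : N -> N -> N -> bool) : Prop :=
  forall U V : list N,
    NoDup U -> NoDup V -> length U <= 4 -> length U = length V ->
    (exists f : N -> N,
        (forall x, In x U -> In (f x) V) /\
        (forall x y, In x U -> In y U -> f x = f y -> x = y) /\
        (forall x y z, In x U -> In y U -> In z U ->
           E (f x) (f y) (f z) = E x y z)) ->
    exists g, is_aut E g /\ (forall v, In v V <-> exists u, In u U /\ g u = v).

Definition order_preserved (E : N -> N -> N -> bool) (le : N -> N -> Prop) : Prop :=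
  forall g, is_aut E g -> forall x y, le x y -> le (g x) (g y).

Definition distinct4 (a b c d : N) : Prop :=
  a <> b /\ a <> c /\ a <> d /\ b <> c /\ b <> d /\ c <> d.

Definition nedges4 (E : N -> N -> N -> bool) (a b c d : N) : nat :=
  Nat.b2n (E a b c) + Nat.b2n (E a b d) + Nat.b2n (E a c d) + Nat.b2n (E b c d).

Definition standing_assumptions (E : N -> N -> N -> bool) (le : N -> N -> Prop) : Prop :=
  countably_infinite /\
  is_3hypergraph E /\
  set_homogeneous_le4 E /\
  is_total_order le /\
  order_preserved E le /\
  (forall i, 1 <= i <= 3 ->
     exists a b c d, distinct4 a b c d /\ nedges4 E a b c d = i) /\
  (forall u1 u2 u3 u4,
     lt_of le u1 u2 -> lt_of le u2 u3 -> lt_of le u3 u4 ->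
     (nedges4 E u1 u2 u3 u4 = 1 -> E u1 u2 u3 = true) /\
     (nedges4 E u1 u2 u3 u4 = 2 -> E u1 u3 u4 = true /\ E u2 u3 u4 = true) /\
     (nedges4 E u1 u2 u3 u4 = 3 ->
        E u1 u2 u3 = true /\ E u1 u2 u4 = true /\ E u1 u3 u4 = true)).

Definition Crel (E : N -> N -> N -> bool) (le : N -> N -> Prop) (x y z : N) : Prop :=
  (y = z /\ y <> x) \/
  (x <> y /\ y <> z /\ x <> z /\ lt_of le x y /\ lt_of le x z /\ E x y z = true) \/
  (x <> y /\ y <> z /\ x <> z /\ lt_of le y x /\ lt_of le z x /\ E x y z = false).

End Defs.

(* Main.v *)
Require Import Defs.
From Stdlib Require Import List Arith Lia ClassicalEpsilon.
Import ListNotations.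

Lemma lt_irr {N} (le : N -> N -> Prop) x : lt_of le x x -> False.
Proof. intros [_ H]; auto. Qed.

Lemma lt_tr {N} (le : N -> N -> Prop) x y z : is_total_order le ->
  lt_of le x y -> lt_of le y z -> lt_of le x z.
Proof.
  intros (Hr & Ha & Ht & Hto) [H1 H2] [H3 H4]; split; [eauto|].
  intro e; subst; apply H2; auto.
Qed.

Lemma lt_as {N} (le : N -> N -> Prop) x y : is_total_order le ->
  lt_of le x y -> lt_of le y x -> False.
Proof. intros (Hr & Ha & Ht & Hto) [H1 H2] [H3 H4]; auto. Qed.

Lemma lt_tot {N} (le : N -> N -> Prop) x y : is_total_order le -> x <> y ->
  lt_of le x y \/ lt_of le y x.
Proof.
  intros (Hr & Ha & Ht & Hto) H. destruct (Hto x y); [left|right]; split; auto.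
Qed.


Lemma e213 {N} (E : N -> N -> N -> bool) : is_3hypergraph E -> forall x y z, E y x z = E x y z.
Proof. intros (A & B & C) x y z; rewrite A; auto. Qed.
Lemma e132 {N} (E : N -> N -> N -> bool) : is_3hypergraph E -> forall x y z, E x z y = E x y z.
Proof. intros (A & B & C) x y z; rewrite B; auto. Qed.
Lemma e231 {N} (E : N -> N -> N -> bool) : is_3hypergraph E -> forall x y z, E y z x = E x y z.
Proof. intros (A & B & C) x y z; rewrite (B y z x), (A y x z); auto. Qed.
Lemma e312 {N} (E : N -> N -> N -> bool) : is_3hypergraph E -> forall x y z, E z x y = E x y z.
Proof. intros (A & B & C) x y z; rewrite (A z x y), (B x z y); auto. Qed.
Lemma e321 {N} (E : N -> N -> N -> bool) : is_3hypergraph E -> forall x y z, E z y x = E x y z.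
Proof. intros (A & B & C) x y z; rewrite (A z y x), (B y z x), (A y x z); auto. Qed.
Lemma ed1 {N} (E : N -> N -> N -> bool) : is_3hypergraph E -> forall x z, E x x z = false.
Proof. intros (A & B & C) x z. destruct (E x x z) eqn:h; auto. apply C in h; tauto. Qed.
Lemma ed2 {N} (E : N -> N -> N -> bool) : is_3hypergraph E -> forall x z, E x z x = false.
Proof. intros (A & B & C) x z. destruct (E x z x) eqn:h; auto. apply C in h; tauto. Qed.
Lemma ed3 {N} (E : N -> N -> N -> bool) : is_3hypergraph E -> forall x z, E z x x = false.
Proof. intros (A & B & C) x z. destruct (E z x x) eqn:h; auto. apply C in h; tauto. Qed.

Lemma aut_lt {N} (E : N -> N -> N -> bool) le g x y :
  order_preserved E le -> is_aut E g -> lt_of le x y -> lt_of le (g x) (g y).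
Proof.
  intros Ho Hg [H1 H2]. split. apply Ho; auto.
  destruct Hg as [[h [Hh _]] _]. intro e. apply H2. rewrite <- (Hh x), <- (Hh y), e; auto.
Qed.

Ltac ltcontra le T :=
  match goal with
  | H : lt_of le ?x ?x |- _ => exfalso; exact (lt_irr le x H)
  | H1 : lt_of le ?x ?y, H2 : lt_of le ?y ?x |- _ => exfalso; exact (lt_as le x y T H1 H2)
  end.

Lemma transport3 {N} (E : N -> N -> N -> bool) le :
  is_3hypergraph E -> set_homogeneous_le4 E -> is_total_order le -> order_preserved E le ->
  forall a b c a' b' c', lt_of le a b -> lt_of le b c -> lt_of le a' b' -> lt_of le b' c' ->
  E a b c = E a' b' c' ->
  exists g, is_aut E g /\ g a = a' /\ g b = b' /\ g c = c'.
Proof.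
  intros H3 Hh T Ho a b c a' b' c' ab bc ab' bc' He.
  assert (ac : lt_of le a c) by (eapply lt_tr; eauto).
  assert (ac' : lt_of le a' c') by (eapply lt_tr; eauto).
  set (f := fun t => if excluded_middle_informative (t = a) then a'
                     else if excluded_middle_informative (t = b) then b' else c').
  assert (fa : f a = a') by (unfold f; destruct (excluded_middle_informative (a = a)); tauto).
  assert (fb : f b = b').
  { unfold f; destruct (excluded_middle_informative (b = a)) as [e|_].
    exfalso; rewrite e in ab; exact (lt_irr le _ ab). destruct (excluded_middle_informative (b = b)); tauto. }
  assert (fc : f c = c').
  { unfold f; destruct (excluded_middle_informative (c = a)) as [e|_].
    exfalso; rewrite e in ac; exact (lt_irr le _ ac). destruct (excluded_middle_informative (c = b)) as [e|_].
    exfalso; rewrite e in bc; exact (lt_irr le _ bc). reflexivity. }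
  clearbody f.
  assert (nd : forall p q r, lt_of le p q -> lt_of le q r -> lt_of le p r -> NoDup [p; q; r]).
  { intros p q r pq qr pr. constructor. simpl. intros [e|[e|[]]]; subst; eapply lt_irr; eauto.
    constructor. simpl. intros [e|[]]; subst; eapply lt_irr; eauto.
    constructor. simpl; auto. constructor. }
  destruct (Hh [a; b; c] [a'; b'; c'] (nd _ _ _ ab bc ac) (nd _ _ _ ab' bc' ac')
     ltac:(simpl; lia) eq_refl) as [g [Hg Hv]].
  { exists f. split; [|split].
    - intros x Hx. simpl in Hx. destruct Hx as [<-|[<-|[<-|[]]]]; rewrite ?fa, ?fb, ?fc; simpl; auto.
    - intros x y Hx Hy. simpl in Hx, Hy.
      destruct Hx as [<-|[<-|[<-|[]]]]; destruct Hy as [<-|[<-|[<-|[]]]];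
      rewrite ?fa, ?fb, ?fc; intro e; auto; rewrite e in *; ltcontra le T.
    - intros x y z Hx Hy Hz. simpl in Hx, Hy, Hz.
      destruct Hx as [<-|[<-|[<-|[]]]]; destruct Hy as [<-|[<-|[<-|[]]]];
      destruct Hz as [<-|[<-|[<-|[]]]]; rewrite ?fa, ?fb, ?fc;
      rewrite ?(ed1 E H3), ?(ed2 E H3), ?(ed3 E H3); try reflexivity;
      first [ symmetry; exact He
            | rewrite (e213 E H3 a' b' c'), (e213 E H3 a b c); symmetry; exact He
            | rewrite (e132 E H3 a' b' c'), (e132 E H3 a b c); symmetry; exact He
            | rewrite (e231 E H3 a' b' c'), (e231 E H3 a b c); symmetry; exact He
            | rewrite (e312 E H3 a' b' c'), (e312 E H3 a b c); symmetry; exact He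
            | rewrite (e321 E H3 a' b' c'), (e321 E H3 a b c); symmetry; exact He ]. }
  exists g. split; [exact Hg|].
  assert (Ga : In (g a) [a'; b'; c']) by (apply Hv; exists a; simpl; auto).
  assert (Gb : In (g b) [a'; b'; c']) by (apply Hv; exists b; simpl; auto).
  assert (Gc : In (g c) [a'; b'; c']) by (apply Hv; exists c; simpl; auto).
  pose proof (aut_lt E le g a b Ho Hg ab) as gab.
  pose proof (aut_lt E le g b c Ho Hg bc) as gbc.
  pose proof (aut_lt E le g a c Ho Hg ac) as gac.
  simpl in Ga, Gb, Gc.
  destruct Ga as [ea|[ea|[ea|[]]]]; destruct Gb as [eb|[eb|[eb|[]]]]; destruct Gc as [ec|[ec|[ec|[]]]];
  rewrite <- ea, <- eb, <- ec in *; try ltcontra le T; auto.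
Qed.

Lemma transport2 {N} (E : N -> N -> N -> bool) le :
  is_3hypergraph E -> set_homogeneous_le4 E -> is_total_order le -> order_preserved E le ->
  forall a b a' b', lt_of le a b -> lt_of le a' b' ->
  exists g, is_aut E g /\ g a = a' /\ g b = b'.
Proof.
  intros H3 Hh T Ho a b a' b' ab ab'.
  set (f := fun t => if excluded_middle_informative (t = a) then a' else b').
  assert (fa : f a = a') by (unfold f; destruct (excluded_middle_informative (a = a)); tauto).
  assert (fb : f b = b').
  { unfold f; destruct (excluded_middle_informative (b = a)) as [e|_].
    exfalso; rewrite e in ab; exact (lt_irr le _ ab). reflexivity. }
  clearbody f.
  assert (nd : forall p q, lt_of le p q -> NoDup [p; q]).
  { intros p q pq. constructor. simpl. intros [e|[]]; subst; eapply lt_irr; eauto.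
    constructor. simpl; auto. constructor. }
  destruct (Hh [a; b] [a'; b'] (nd _ _ ab) (nd _ _ ab') ltac:(simpl; lia) eq_refl) as [g [Hg Hv]].
  { exists f. split; [|split].
    - intros x Hx. simpl in Hx. destruct Hx as [<-|[<-|[]]]; rewrite ?fa, ?fb; simpl; auto.
    - intros x y Hx Hy. simpl in Hx, Hy.
      destruct Hx as [<-|[<-|[]]]; destruct Hy as [<-|[<-|[]]];
      rewrite ?fa, ?fb; intro e; auto; rewrite e in *; ltcontra le T.
    - intros x y z Hx Hy Hz. simpl in Hx, Hy, Hz.
      destruct Hx as [<-|[<-|[]]]; destruct Hy as [<-|[<-|[]]];
      destruct Hz as [<-|[<-|[]]]; rewrite ?fa, ?fb;
      rewrite ?(ed1 E H3), ?(ed2 E H3), ?(ed3 E H3); reflexivity. }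
  exists g. split; [exact Hg|].
  assert (Ga : In (g a) [a'; b']) by (apply Hv; exists a; simpl; auto).
  assert (Gb : In (g b) [a'; b']) by (apply Hv; exists b; simpl; auto).
  pose proof (aut_lt E le g a b Ho Hg ab) as gab.
  simpl in Ga, Gb.
  destruct Ga as [ea|[ea|[]]]; destruct Gb as [eb|[eb|[]]];
  rewrite <- ea, <- eb in *; try ltcontra le T; auto.
Qed.
Lemma sort4 {N} (le : N -> N -> Prop) (P : N -> N -> N -> N -> Prop) :
  is_total_order le ->
  (forall a b c d, P a b c d -> P b a c d) ->
  (forall a b c d, P a b c d -> P a c b d) ->
  (forall a b c d, P a b c d -> P a b d c) ->
  forall a b c d, distinct4 a b c d -> P a b c d ->
  exists p q r s, lt_of le p q /\ lt_of le q r /\ lt_of le r s /\ P p q r s.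
Proof.
  intros T s12 s23 s34.
  assert (ins4 : forall a b c d, lt_of le a b -> lt_of le b c -> d <> a -> d <> b -> d <> c ->
     P a b c d -> exists p q r s, lt_of le p q /\ lt_of le q r /\ lt_of le r s /\ P p q r s).
  { intros a b c d ab bc da db dc H.
    destruct (lt_tot le c d T (not_eq_sym dc)) as [cd|dc'].
    { exists a, b, c, d; split; [auto|split; [auto|split; [auto|auto]]]. }
    destruct (lt_tot le b d T (not_eq_sym db)) as [bd|db'].
    { exists a, b, d, c; split; [auto|split; [auto|split; [auto|auto]]]. }
    destruct (lt_tot le a d T (not_eq_sym da)) as [ad|da'].
    { exists a, d, b, c; split; [auto|split; [auto|split; [auto|auto]]]. }
    exists d, a, b, c; split; [auto|split; [auto|split; [auto|auto]]]. }
  assert (ins3 : forall a b c d, lt_of le a b -> c <> a -> c <> b -> d <> a -> d <> b -> d <> c ->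
     P a b c d -> exists p q r s, lt_of le p q /\ lt_of le q r /\ lt_of le r s /\ P p q r s).
  { intros a b c d ab ca cb da db dc H.
    destruct (lt_tot le b c T (not_eq_sym cb)) as [bc|cb'].
    { apply (ins4 a b c d); auto. }
    destruct (lt_tot le a c T (not_eq_sym ca)) as [ac|ca'].
    { apply (ins4 a c b d); auto. }
    apply (ins4 c a b d); auto. }
  intros a b c d (ab & ac & ad & bc & bd & cd) H.
  destruct (lt_tot le a b T ab) as [ab'|ba'].
  { apply (ins3 a b c d); auto. }
  apply (ins3 b a c d); auto.
Qed.

Lemma ne_s12 {N} (E : N -> N -> N -> bool) : is_3hypergraph E ->
  forall a b c d, nedges4 E a b c d = nedges4 E b a c d.
Proof. intros H a b c d; unfold nedges4.
  rewrite (e213 E H a b c), (e213 E H a b d); lia. Qed.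
Lemma ne_s23 {N} (E : N -> N -> N -> bool) : is_3hypergraph E ->
  forall a b c d, nedges4 E a b c d = nedges4 E a c b d.
Proof. intros H a b c d; unfold nedges4.
  rewrite (e132 E H a b c), (e213 E H b c d); lia. Qed.
Lemma ne_s34 {N} (E : N -> N -> N -> bool) : is_3hypergraph E ->
  forall a b c d, nedges4 E a b c d = nedges4 E a b d c.
Proof. intros H a b c d; unfold nedges4.
  rewrite (e132 E H a c d), (e132 E H b c d); lia. Qed.

Lemma sorted_set {N} (E : N -> N -> N -> bool) le : is_3hypergraph E -> is_total_order le ->
  forall i, (exists a b c d, distinct4 a b c d /\ nedges4 E a b c d = i) ->
  exists p q r s, lt_of le p q /\ lt_of le q r /\ lt_of le r s /\ nedges4 E p q r s = i.
Proof.
  intros H3 T i (a & b & c & d & D & Hn).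
  apply (sort4 le (fun a b c d => nedges4 E a b c d = i) T) with a b c d; auto;
  intros; [rewrite ne_s12 | rewrite ne_s23 | rewrite ne_s34]; auto.
Qed.

Lemma Eg {N} (E : N -> N -> N -> bool) g : is_aut E g -> forall a b c, E (g a) (g b) (g c) = E a b c.
Proof. intros [_ H]; auto. Qed.
Lemma lt_ne1 {N} (le : N -> N -> Prop) x y : lt_of le x y -> x <> y.
Proof. intros [_ H]; auto. Qed.
Lemma lt_ne2 {N} (le : N -> N -> Prop) x y : lt_of le x y -> y <> x.
Proof. intros [_ H]; auto. Qed.

Definition rule_hyp {N} (E : N -> N -> N -> bool) (le : N -> N -> Prop) :=
  forall u1 u2 u3 u4,
     lt_of le u1 u2 -> lt_of le u2 u3 -> lt_of le u3 u4 ->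
     (nedges4 E u1 u2 u3 u4 = 1 -> E u1 u2 u3 = true) /\
     (nedges4 E u1 u2 u3 u4 = 2 -> E u1 u3 u4 = true /\ E u2 u3 u4 = true) /\
     (nedges4 E u1 u2 u3 u4 = 3 ->
        E u1 u2 u3 = true /\ E u1 u2 u4 = true /\ E u1 u3 u4 = true).

Definition sorted4 {N} (le : N -> N -> Prop) p q r s :=
  lt_of le p q /\ lt_of le q r /\ lt_of le r s.

Ltac grab E le H3 T Hex Hrule i :=
  let p := fresh "p" in let q := fresh "q" in let r := fresh "r" in let s := fresh "s" in
  destruct (sorted_set E le H3 T i (Hex i ltac:(lia))) as (p & q & r & s & pq & qr & rs & Hn);
  destruct (Hrule p q r s pq qr rs) as (R1 & R2 & R3);
  exists p, q, r, s; split; [split; [exact pq|split; [exact qr|exact rs]]|];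
  unfold nedges4 in *;
  destruct (E p q r), (E p q s), (E p r s), (E q r s); simpl in *;
  repeat split; try reflexivity; try lia;
  try (destruct (R1 eq_refl); fail); try (destruct (R2 eq_refl) as [h1 h2]; discriminate);
  try (destruct (R3 eq_refl) as (h1 & h2 & h3); discriminate).

Lemma getT {N} (E : N -> N -> N -> bool) le : is_3hypergraph E -> is_total_order le ->
  (forall i, 1 <= i <= 3 -> exists a b c d, distinct4 a b c d /\ nedges4 E a b c d = i) ->
  rule_hyp E le ->
  (exists p q r s, sorted4 le p q r s /\ E p q r = true /\ E p q s = false /\ E p r s = false /\ E q r s = false) /\
  (exists p q r s, sorted4 le p q r s /\ E p q r = false /\ E p q s = false /\ E p r s = true /\ E q r s = true) /\
  (exists p q r s, sorted4 le p q r s /\ E p q r = true /\ E p q s = true /\ E p r s = true /\ E q r s = false).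
Proof.
  intros H3 T Hex Hrule. split; [|split].
  - grab E le H3 T Hex Hrule 1.
  - grab E le H3 T Hex Hrule 2.
  - grab E le H3 T Hex Hrule 3.
Qed.
Ltac ltc le T :=
  match goal with
  | H : lt_of le ?x ?x |- _ => exfalso; exact (lt_irr le x H)
  | H1 : lt_of le ?x ?y, H2 : lt_of le ?y ?x |- _ => exfalso; exact (lt_as le x y T H1 H2)
  end.

Lemma getT40 {N} (E : N -> N -> N -> bool) le :
  is_3hypergraph E -> set_homogeneous_le4 E -> is_total_order le -> order_preserved E le ->
  (forall i, 1 <= i <= 3 -> exists a b c d, distinct4 a b c d /\ nedges4 E a b c d = i) ->
  rule_hyp E le ->
  (exists p q r s, sorted4 le p q r s /\ E p q r = true /\ E p q s = true /\ E p r s = true /\ E q r s = true) /\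
  (exists p q r s, sorted4 le p q r s /\ E p q r = false /\ E p q s = false /\ E p r s = false /\ E q r s = false).
Proof.
  intros H3 Hh T Ho Hex Hrule.
  destruct (getT E le H3 T Hex Hrule) as
    [(t0 & t1 & t2 & t3 & (t01 & t12 & t23) & a1 & a2 & a3 & a4)
     [(v0 & v1 & v2 & v3 & (v01 & v12 & v23) & b1 & b2 & b3 & b4) _]].
  assert (t13 : lt_of le t1 t3) by (eapply lt_tr; eauto).
  assert (t03 : lt_of le t0 t3) by (eapply lt_tr; eauto).
  split.
  - destruct (transport3 E le H3 Hh T Ho t1 t2 t3 t0 t1 t3 t12 t23 t01 t13 ltac:(congruence))
      as [g [Hg [g1 [g2 g3]]]].
    pose proof (aut_lt E le g t0 t1 Ho Hg t01) as w0. rewrite g1 in w0.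
    pose proof (Eg E g Hg t0 t1 t2) as ew; rewrite g1, g2, a1 in ew.
    exists (g t0), t0, t1, t2. split; [split; auto|].
    destruct (Hrule (g t0) t0 t1 t2 w0 t01 t12) as (R1 & R2 & R3).
    unfold nedges4 in *. rewrite ew, a1 in *.
    destruct (E (g t0) t0 t2), (E (g t0) t1 t2); simpl in *; repeat split; auto.
    all: first [ destruct (R3 eq_refl) as (h1 & h2 & h3); congruence
               | destruct (R2 eq_refl) as (h1 & h2); congruence
               | pose proof (R1 eq_refl); congruence ].
  - destruct (transport3 E le H3 Hh T Ho v1 v2 v3 t0 t1 t2 v12 v23 t01 t12 ltac:(congruence))
      as [g [Hg [g1 [g2 g3]]]].
    pose proof (aut_lt E le g v0 v1 Ho Hg v01) as w0. rewrite g1 in w0.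
    pose proof (Eg E g Hg v0 v1 v2) as ew; rewrite g1, g2, b1 in ew.
    exists (g v0), t0, t1, t3. split; [split; auto|].
    destruct (Hrule (g v0) t0 t1 t3 w0 t01 t13) as (R1 & R2 & R3).
    unfold nedges4 in *. rewrite ew, a2 in *.
    destruct (E (g v0) t0 t3), (E (g v0) t1 t3); simpl in *; repeat split; auto.
    all: first [ destruct (R3 eq_refl) as (h1 & h2 & h3); congruence
               | destruct (R2 eq_refl) as (h1 & h2); congruence
               | pose proof (R1 eq_refl); congruence ].
Qed.
Ltac tr4 le T a b c d h1 h2 h3 :=
  let ac := fresh in let bd := fresh in let ad := fresh in
  pose proof (lt_tr le a b c T h1 h2) as ac;
  pose proof (lt_tr le b c d T h2 h3) as bd;
  pose proof (lt_tr le a b d T h1 bd) as ad.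

Ltac atom := first [ assumption | eapply lt_ne1; eassumption | eapply lt_ne2; eassumption ].
Ltac c2 := right; left; refine (conj _ (conj _ (conj _ (conj _ (conj _ _))))); try atom.
Ltac c3 := right; right; refine (conj _ (conj _ (conj _ (conj _ (conj _ _))))); try atom.

Theorem lemma3p11 (N : Type) (E : N -> N -> N -> bool) (le : N -> N -> Prop) :
  standing_assumptions E le ->
  (forall x y z : N, lt_of le x y -> lt_of le y z ->
     Crel E le x y z \/ Crel E le z x y) /\
  (forall x y z : N, Crel E le x y z ->
     (exists w1 : N, Crel E le w1 y z /\ Crel E le x y w1 /\
                     lt_of le w1 y /\ lt_of le w1 z) /\
     (exists w2 : N, Crel E le w2 y z /\ Crel E le x y w2 /\
                     lt_of le y w2 /\ lt_of le z w2)).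
Proof.
  intros (Hc & H3 & Hh & T & Ho & Hex & Hrule).
  destruct (getT E le H3 T Hex Hrule) as
    [(t0 & t1 & t2 & t3 & (t01 & t12 & t23) & a1 & a2 & a3 & a4)
     [_ (u0 & u1 & u2 & u3 & (u01 & u12 & u23) & b1 & b2 & b3 & b4)]].
  destruct (getT40 E le H3 Hh T Ho Hex Hrule) as
    [(o0 & o1 & o2 & o3 & (o01 & o12 & o23) & f1 & f2 & f3 & f4)
     (z0 & z1 & z2 & z3 & (z01 & z12 & z23) & h1 & h2 & h3 & h4)].
  tr4 le T t0 t1 t2 t3 t01 t12 t23.
  tr4 le T u0 u1 u2 u3 u01 u12 u23.
  tr4 le T o0 o1 o2 o3 o01 o12 o23.
  tr4 le T z0 z1 z2 z3 z01 z12 z23.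
  pose proof (e132 E H3) as P132. pose proof (e213 E H3) as P213.
  pose proof (e231 E H3) as P231. pose proof (e312 E H3) as P312.
  pose proof (e321 E H3) as P321.
  split.
  - intros x y z xy yz. pose proof (lt_tr le x y z T xy yz) as xz.
    destruct (E x y z) eqn:e.
    + left. c2.
    + right. c3. rewrite P312; exact e.
  - intros x y z HC.
    destruct HC as [[eyz nyx] | [(nxy & nyz & nxz & xy & xz & e) | (nxy & nyz & nxz & yx & zx & e)]].
    + subst z. destruct (lt_tot le x y T (not_eq_sym nyx)) as [xy|yx].
      * split.
        -- destruct (transport2 E le H3 Hh T Ho o0 o2 x y ltac:(assumption) xy) as [g [Hg [<- <-]]].
           pose proof (aut_lt E le g o0 o1 Ho Hg ltac:(assumption)).
           pose proof (aut_lt E le g o1 o2 Ho Hg ltac:(assumption)).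
           assert (E (g o0) (g o2) (g o1) = true) by (rewrite Eg, P132; auto).
           exists (g o1). split; [|split; [|split]]; try atom.
           left; split; [reflexivity|atom]. c2.
        -- destruct (transport2 E le H3 Hh T Ho o0 o1 x y ltac:(assumption) xy) as [g [Hg [<- <-]]].
           pose proof (aut_lt E le g o0 o2 Ho Hg ltac:(assumption)).
           pose proof (aut_lt E le g o1 o2 Ho Hg ltac:(assumption)).
           assert (E (g o0) (g o1) (g o2) = true) by (rewrite Eg; auto).
           exists (g o2). split; [|split; [|split]]; try atom.
           left; split; [reflexivity|atom]. c2.
      * split.
        -- destruct (transport2 E le H3 Hh T Ho z1 z2 y x ltac:(assumption) yx) as [g [Hg [<- <-]]].
           pose proof (aut_lt E le g z0 z1 Ho Hg ltac:(assumption)).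
           pose proof (aut_lt E le g z0 z2 Ho Hg ltac:(assumption)).
           assert (E (g z2) (g z1) (g z0) = false) by (rewrite Eg, P321; auto).
           exists (g z0). split; [|split; [|split]]; try atom.
           left; split; [reflexivity|atom]. c3.
        -- destruct (transport2 E le H3 Hh T Ho z0 z2 y x ltac:(assumption) yx) as [g [Hg [<- <-]]].
           pose proof (aut_lt E le g z0 z1 Ho Hg ltac:(assumption)).
           pose proof (aut_lt E le g z1 z2 Ho Hg ltac:(assumption)).
           assert (E (g z2) (g z0) (g z1) = false) by (rewrite Eg, P312; auto).
           exists (g z1). split; [|split; [|split]]; try atom.
           left; split; [reflexivity|atom]. c3.
    + destruct (lt_tot le y z T nyz) as [yz|zy].
      * split.
        -- destruct (transport3 E le H3 Hh T Ho o0 o2 o3 x y z ltac:(assumption) ltac:(assumption)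
              xy yz ltac:(congruence)) as [g [Hg [<- [<- <-]]]].
           pose proof (aut_lt E le g o0 o1 Ho Hg ltac:(assumption)).
           pose proof (aut_lt E le g o1 o2 Ho Hg ltac:(assumption)).
           pose proof (aut_lt E le g o1 o3 Ho Hg ltac:(assumption)).
           assert (E (g o1) (g o2) (g o3) = true) by (rewrite Eg; auto).
           assert (E (g o0) (g o2) (g o1) = true) by (rewrite Eg, P132; auto).
           exists (g o1). split; [|split; [|split]]; try atom; c2.
        -- destruct (transport3 E le H3 Hh T Ho u0 u1 u2 x y z ltac:(assumption) ltac:(assumption)
              xy yz ltac:(congruence)) as [g [Hg [<- [<- <-]]]].
           pose proof (aut_lt E le g u0 u3 Ho Hg ltac:(assumption)).
           pose proof (aut_lt E le g u1 u3 Ho Hg ltac:(assumption)).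
           pose proof (aut_lt E le g u2 u3 Ho Hg ltac:(assumption)).
           assert (E (g u3) (g u1) (g u2) = false) by (rewrite Eg, P312; auto).
           assert (E (g u0) (g u1) (g u3) = true) by (rewrite Eg; auto).
           exists (g u3). split; [|split; [|split]]; try atom; [c3|c2].
      * split.
        -- destruct (transport3 E le H3 Hh T Ho o0 o2 o3 x z y ltac:(assumption) ltac:(assumption)
              xz zy ltac:(rewrite P132; congruence)) as [g [Hg [<- [<- <-]]]].
           pose proof (aut_lt E le g o0 o1 Ho Hg ltac:(assumption)).
           pose proof (aut_lt E le g o1 o2 Ho Hg ltac:(assumption)).
           pose proof (aut_lt E le g o1 o3 Ho Hg ltac:(assumption)).
           assert (E (g o1) (g o3) (g o2) = true) by (rewrite Eg, P132; auto).
           assert (E (g o0) (g o3) (g o1) = true) by (rewrite Eg, P132; auto).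
           exists (g o1). split; [|split; [|split]]; try atom; c2.
        -- destruct (transport3 E le H3 Hh T Ho u0 u1 u2 x z y ltac:(assumption) ltac:(assumption)
              xz zy ltac:(rewrite P132; congruence)) as [g [Hg [<- [<- <-]]]].
           pose proof (aut_lt E le g u0 u3 Ho Hg ltac:(assumption)).
           pose proof (aut_lt E le g u1 u3 Ho Hg ltac:(assumption)).
           pose proof (aut_lt E le g u2 u3 Ho Hg ltac:(assumption)).
           assert (E (g u3) (g u2) (g u1) = false) by (rewrite Eg, P321; auto).
           assert (E (g u0) (g u2) (g u3) = true) by (rewrite Eg; auto).
           exists (g u3). split; [|split; [|split]]; try atom; [c3|c2].
    + destruct (lt_tot le y z T nyz) as [yz|zy].
      * split.
        -- destruct (transport3 E le H3 Hh T Ho t1 t2 t3 y z x ltac:(assumption) ltac:(assumption)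
              yz zx ltac:(rewrite P231; congruence)) as [g [Hg [<- [<- <-]]]].
           pose proof (aut_lt E le g t0 t1 Ho Hg ltac:(assumption)).
           pose proof (aut_lt E le g t0 t2 Ho Hg ltac:(assumption)).
           pose proof (aut_lt E le g t0 t3 Ho Hg ltac:(assumption)).
           assert (E (g t0) (g t1) (g t2) = true) by (rewrite Eg; auto).
           assert (E (g t3) (g t1) (g t0) = false) by (rewrite Eg, P321; auto).
           exists (g t0). split; [|split; [|split]]; try atom; [c2|c3].
        -- destruct (transport3 E le H3 Hh T Ho z0 z1 z3 y z x ltac:(assumption) ltac:(assumption)
              yz zx ltac:(rewrite P231; congruence)) as [g [Hg [<- [<- <-]]]].
           pose proof (aut_lt E le g z0 z2 Ho Hg ltac:(assumption)).
           pose proof (aut_lt E le g z1 z2 Ho Hg ltac:(assumption)).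
           pose proof (aut_lt E le g z2 z3 Ho Hg ltac:(assumption)).
           assert (E (g z2) (g z0) (g z1) = false) by (rewrite Eg, P312; auto).
           assert (E (g z3) (g z0) (g z2) = false) by (rewrite Eg, P312; auto).
           exists (g z2). split; [|split; [|split]]; try atom; c3.
      * split.
        -- destruct (transport3 E le H3 Hh T Ho t1 t2 t3 z y x ltac:(assumption) ltac:(assumption)
              zy yx ltac:(rewrite P321; congruence)) as [g [Hg [<- [<- <-]]]].
           pose proof (aut_lt E le g t0 t1 Ho Hg ltac:(assumption)).
           pose proof (aut_lt E le g t0 t2 Ho Hg ltac:(assumption)).
           pose proof (aut_lt E le g t0 t3 Ho Hg ltac:(assumption)).
           assert (E (g t0) (g t2) (g t1) = true) by (rewrite Eg, P132; auto).
           assert (E (g t3) (g t2) (g t0) = false) by (rewrite Eg, P321; auto).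
           exists (g t0). split; [|split; [|split]]; try atom; [c2|c3].
        -- destruct (transport3 E le H3 Hh T Ho z0 z1 z3 z y x ltac:(assumption) ltac:(assumption)
              zy yx ltac:(rewrite P321; congruence)) as [g [Hg [<- [<- <-]]]].
           pose proof (aut_lt E le g z0 z2 Ho Hg ltac:(assumption)).
           pose proof (aut_lt E le g z1 z2 Ho Hg ltac:(assumption)).
           pose proof (aut_lt E le g z2 z3 Ho Hg ltac:(assumption)).
           assert (E (g z2) (g z1) (g z0) = false) by (rewrite Eg, P321; auto).
           assert (E (g z3) (g z1) (g z2) = false) by (rewrite Eg, P312; auto).
           exists (g z2). split; [|split; [|split]]; try atom; c3.
Qed.
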